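(* If a privacy definition $\mathrm{Priv}=\{\mathcal{M}\}$ consists of just one algorithm $\mathcal{M}$, then $\mathrm{CNF}(\mathrm{Priv})$ is the set of all algorithms of the form $\mathcal{A}\circ\mathcal{M}$, where $\mathrm{range}(\mathcal{M})\subseteq\mathrm{domain}(\mathcal{A})$ and the random bits of $\mathcal{A}$ and $\mathcal{M}$ are independent of each other.
   Context: An algorithm $\mathcal{M}$ has a countable input domain $\mathbb{I}=\{D_1,D_2,\dots\}$ and a countable range; it is identified with its output probabilities $P(\mathcal{M}(D)=\omega)$ (two algorithms with the same domain, range and output probabilities are considered equal). A privacy definition is a set of algorithms with the same input domain. For algorithms $\mathcal{M}$ and $\mathcal{A}$ with $\mathrm{range}(\mathcal{M})\subseteq\mathrm{domain}(\mathcal{A})$ and independent randomness, $\mathcal{A}\circ\mathcal{M}$ runs $\mathcal{M}$ and then runs $\mathcal{A}$ on its output. The consistent normal form $\mathrm{CNF}(\mathrm{Priv})$ is the smallest set $S$ of algorithms containing $\mathrm{Priv}$ such that (post-processing) whenever $\mathcal{M}\in S$ and $\mathcal{A}$ is any algorithm whose domain contains $\mathrm{range}(\mathcal{M})$ with independent random bits, then $\mathcal{A}\circ\mathcal{M}\in S$; and (convexity) whenever $\mathcal{M}_1,\mathcal{M}_2\in S$ and $p\in[0,1]$, the algorithm that runs $\mathcal{M}_1$ with probability $p$ and $\mathcal{M}_2$ with probability $1-p$ belongs to $S$. *)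

(* Defs.v *)
From Stdlib Require Import Reals.
From Coquelicot Require Import Coquelicot.
Open Scope R_scope.

(* Outputs are encoded as natural numbers (a fixed universal countable
   output space).  A probability distribution over outputs is a nonnegative
   function summing to 1. *)
Definition is_dist (p : nat -> R) : Prop :=
  (forall w, 0 <= p w) /\ is_series p 1.

(* An algorithm with input domain I: its output probabilities
   M D w = P(M(D) = w). *)
Definition algo (I : Type) := I -> nat -> R.

Definition is_algorithm {I : Type} (M : algo I) : Prop :=
  forall D, is_dist (M D).

(* A post-processing algorithm A, defined on (a superset of) the range of M:
   A x w = P(A(x) = w). *)
Definition is_postproc (A : nat -> nat -> R) : Prop :=
  forall x, is_dist (A x).

(* Composition A o M with independent randomness:
   P((A o M)(D) = w) = sum_x P(M(D) = x) P(A(x) = w). *)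
Definition postcomp {I : Type} (A : nat -> nat -> R) (M : algo I) : algo I :=
  fun D w => Series (fun x => M D x * A x w).

Definition mix {I : Type} (p : R) (M1 M2 : algo I) : algo I :=
  fun D w => p * M1 D w + (1 - p) * M2 D w.

Definition closed_postproc {I : Type} (S : algo I -> Prop) : Prop :=
  forall M A, S M -> is_postproc A -> S (postcomp A M).

Definition closed_convex {I : Type} (S : algo I -> Prop) : Prop :=
  forall M1 M2 p, S M1 -> S M2 -> 0 <= p <= 1 -> S (mix p M1 M2).

Definition CNF {I : Type} (Priv : algo I -> Prop) (N : algo I) : Prop :=
  forall S : algo I -> Prop,
    (forall M, Priv M -> S M) -> closed_postproc S -> closed_convex S -> S N.

(* Main.v *)
Require Import Defs.
From Stdlib Require Import Reals Lra Arith Lia FunctionalExtensionality.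
From Coquelicot Require Import Coquelicot.
Open Scope R_scope.

Lemma s2l a l : is_series a l -> is_lim_seq (sum_n a) l.
Proof. intro H. exact H. Qed.
Lemma l2s a (l:R) : is_lim_seq (sum_n a) l -> is_series a l.
Proof. intro H. exact H. Qed.

Lemma ex_series_le_R (a b : nat -> R) : (forall n, Rabs (a n) <= b n) -> ex_series b -> ex_series a.
Proof. intros H Hb. apply (@ex_series_le R_AbsRing R_CompleteNormedModule a b); auto. Qed.

Lemma is_series_scal_R (c : R) (a : nat -> R) l : is_series a l -> is_series (fun n => c * a n) (c * l).
Proof. intro H. apply (@is_series_scal R_AbsRing R_NormedModule c a l H). Qed.

Lemma sum_n_nonneg (a : nat -> R) : (forall n, 0 <= a n) -> forall n, 0 <= sum_n a n.
Proof.
  intros H n; induction n. rewrite sum_O; auto.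
  rewrite sum_Sn. unfold plus; simpl. specialize (H (S n)). lra.
Qed.

Lemma ps_le (a : nat -> R) l : (forall n, 0 <= a n) -> is_series a l ->
  forall n, sum_n a n <= l.
Proof.
  intros Hp Hs n. apply (is_lim_seq_incr_compare (sum_n a)); [now apply s2l|].
  intro k. rewrite sum_Sn. unfold plus; simpl. specialize (Hp (S k)). lra.
Qed.

Lemma term_le (a : nat -> R) l : (forall n, 0 <= a n) -> is_series a l ->
  forall n, a n <= l.
Proof.
  intros Hp Hs n. eapply Rle_trans; [|apply (ps_le a l Hp Hs n)].
  destruct n. rewrite sum_O; lra.
  rewrite sum_Sn. unfold plus; simpl. pose proof (sum_n_nonneg a Hp n). lra.
Qed.

Lemma lim_le_bound (a : nat -> R) l B : is_series a l -> (forall n, sum_n a n <= B) -> l <= B.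
Proof.
  intros Hs HB.
  pose proof (is_lim_seq_le (sum_n a) (fun _ => B) l B HB (s2l _ _ Hs) (is_lim_seq_const B)).
  simpl in H. exact H.
Qed.

Lemma bounded_conv (a : nat -> R) B : (forall n, 0 <= a n) -> (forall n, sum_n a n <= B) ->
  ex_series a.
Proof.
  intros Hp HB.
  destruct (ex_finite_lim_seq_incr (sum_n a) B) as [l Hl]; auto.
  intro k. rewrite sum_Sn. unfold plus; simpl. specialize (Hp (S k)). lra.
  exists l. now apply l2s.
Qed.

Lemma fin_swap (b : nat -> nat -> R) (c : nat -> R) :
  (forall k, is_series (fun x => b k x) (c k)) ->
  forall m, is_series (fun x => sum_n (fun k => b k x) m) (sum_n c m).
Proof.
  intros H m; induction m.
  - rewrite sum_O. eapply is_series_ext; [|apply (H 0%nat)]. intro n. simpl. now rewrite sum_O.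
  - rewrite sum_Sn. eapply is_series_ext; [|apply (is_series_plus _ _ _ _ IHm (H (S m)))].
    intro n. simpl. now rewrite sum_Sn.
Qed.

Lemma tonelli (a : nat -> nat -> R) (r : nat -> R) L :
  (forall x y, 0 <= a x y) -> (forall x, is_series (a x) (r x)) -> is_series r L ->
  exists c, (forall y, is_series (fun x => a x y) (c y)) /\ is_series c L.
Proof.
  intros Hp Hr HL.
  assert (Hex : forall y, ex_series (fun x => a x y)).
  { intro y. apply (ex_series_le_R _ r).
    - intro x. rewrite Rabs_pos_eq by apply Hp.
      apply (term_le (a x) (r x) (Hp x) (Hr x)).
    - now exists L. }
  exists (fun y => Series (fun x => a x y)). split.
  { intro y. now apply Series_correct. }
  assert (Hc : forall y, is_series (fun x => a x y) (Series (fun x => a x y)))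
    by (intro; now apply Series_correct).
  assert (Hcp : forall y, 0 <= Series (fun x => a x y)).
  { intro y. apply (Rle_trans _ (a 0%nat y)); [apply Hp|].
    apply (term_le (fun x => a x y)); auto. }
  assert (Hrp : forall x, 0 <= r x).
  { intro x. apply (Rle_trans _ (a x 0%nat)); [apply Hp|].
    apply (term_le (a x)); auto. }
  assert (H1 : forall m, sum_n (fun y => Series (fun x => a x y)) m <= L).
  { intro m. pose proof (fin_swap (fun k x => a x k) _ Hc m) as Hs.
    rewrite <- (is_series_unique _ _ Hs). rewrite <- (is_series_unique _ _ HL).
    apply Series_le; [|now exists L].
    intro x. split. apply sum_n_nonneg; auto. apply (ps_le (a x)); auto. }
  destruct (bounded_conv _ L Hcp H1) as [L' HL'].
  assert (L' <= L) by (apply (lim_le_bound _ _ _ HL' H1)).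
  assert (L <= L').
  { apply (lim_le_bound r L L' HL). intro n.
    pose proof (fin_swap (fun k y => a k y) r Hr n) as Hs.
    rewrite <- (is_series_unique _ _ Hs). rewrite <- (is_series_unique _ _ HL').
    apply Series_le; [|now exists L'].
    intro y. split. apply sum_n_nonneg; auto.
    apply (ps_le (fun x => a x y)); auto. }
  replace L with L' by lra. exact HL'.
Qed.

Definition delta (x w : nat) : R := if Nat.eq_dec x w then 1 else 0.

Lemma sum_n_zero (f : nat -> R) n : (forall k, (k <= n)%nat -> f k = 0) -> sum_n f n = 0.
Proof.
  induction n; intro H. rewrite sum_O. apply H; lia.
  rewrite sum_Sn. unfold plus; simpl. rewrite IHn by (intros; apply H; lia).
  rewrite H by lia. lra.
Qed.

Lemma is_series_point (f : nat -> R) (w : nat) :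
  (forall x, x <> w -> f x = 0) -> is_series f (f w).
Proof.
  intro H. apply l2s. apply (is_lim_seq_ext_loc (fun _ => f w)); [|apply is_lim_seq_const].
  exists w. intros n Hn. induction n.
  - assert (w = 0%nat) by lia. subst. now rewrite sum_O.
  - destruct (Nat.eq_dec w (S n)).
    + subst. rewrite sum_Sn. unfold plus; simpl.
      rewrite sum_n_zero by (intros; apply H; lia). lra.
    + rewrite sum_Sn. unfold plus; simpl. rewrite <- IHn by lia. rewrite (H (S n)) by lia. lra.
Qed.

Lemma delta_post : is_postproc delta.
Proof.
  intro x. split.
  - intro w. unfold delta. destruct Nat.eq_dec; lra.
  - replace 1 with (delta x x) by (unfold delta; destruct Nat.eq_dec; congruence).
    apply is_series_point. intros y Hy. unfold delta. destruct Nat.eq_dec; congruence.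
Qed.

Lemma postcomp_delta {I} (M : algo I) : postcomp delta M = M.
Proof.
  apply functional_extensionality; intro D; apply functional_extensionality; intro w.
  unfold postcomp. apply is_series_unique.
  assert (E : M D w * delta w w = M D w) by (unfold delta; destruct Nat.eq_dec; [lra|congruence]).
  rewrite <- E.
  apply (is_series_point (fun x => M D x * delta x w)).
  intros x Hx. unfold delta. destruct Nat.eq_dec; [congruence|lra].
Qed.

Lemma kernel_le1 (A : nat -> nat -> R) : is_postproc A -> forall x w, 0 <= A x w <= 1.
Proof.
  intros HA x w. destruct (HA x) as [Hp Hs]. split; auto.
  apply (term_le (A x)); auto.
Qed.

Definition kcomp (A B : nat -> nat -> R) : nat -> nat -> R :=
  fun x w => Series (fun y => A x y * B y w).

Lemma kcomp_is_series A B : is_postproc A -> is_postproc B ->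
  forall x w, is_series (fun y => A x y * B y w) (kcomp A B x w).
Proof.
  intros HA HB x w. apply Series_correct. apply (ex_series_le_R _ (A x)).
  - intro y. 
    destruct (kernel_le1 A HA x y), (kernel_le1 B HB y w).
    rewrite Rabs_pos_eq by nra. nra.
  - exists 1. apply HA.
Qed.

Lemma kcomp_post A B : is_postproc A -> is_postproc B -> is_postproc (kcomp A B).
Proof.
  intros HA HB x.
  destruct (tonelli (fun y w => A x y * B y w) (A x) 1) as [c [Hc1 Hc2]].
  - intros y w. destruct (kernel_le1 A HA x y), (kernel_le1 B HB y w). nra.
  - intro y. rewrite <- (Rmult_1_r (A x y)) at 1.
    apply (is_series_scal_R (A x y) (B y) 1). apply HB.
  - apply HA.
  - assert (E : forall w, kcomp A B x w = c w).
    { intro w. pose proof (kcomp_is_series A B HA HB x w).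
      rewrite <- (is_series_unique _ _ H). now apply is_series_unique. }
    split.
    + intro w. rewrite E. apply (Rle_trans _ (A x 0%nat * B 0%nat w)).
      destruct (kernel_le1 A HA x 0), (kernel_le1 B HB 0 w). nra.
      apply (term_le (fun y => A x y * B y w)); auto.
      intro y. destruct (kernel_le1 A HA x y), (kernel_le1 B HB y w). nra.
    + eapply is_series_ext; [|exact Hc2]. intro; now rewrite E.
Qed.

Lemma postcomp_comp {I} (M : algo I) (HM : is_algorithm M) A B :
  is_postproc A -> is_postproc B ->
  postcomp B (postcomp A M) = postcomp (kcomp A B) M.
Proof.
  intros HA HB.
  apply functional_extensionality; intro D; apply functional_extensionality; intro w.
  destruct (HM D) as [HMp HMs].
  assert (HK := kcomp_post A B HA HB).
  assert (Hr : ex_series (fun x => M D x * kcomp A B x w)).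
  { apply (ex_series_le_R _ (M D)); [|now exists 1].
    intro x. 
    destruct (kernel_le1 _ HK x w). specialize (HMp x). rewrite Rabs_pos_eq by nra. nra. }
  destruct Hr as [L HL].
  destruct (tonelli (fun x y => M D x * (A x y * B y w)) (fun x => M D x * kcomp A B x w) L)
    as [c [Hc1 Hc2]].
  - intros x y. destruct (kernel_le1 A HA x y), (kernel_le1 B HB y w). specialize (HMp x).
    apply Rmult_le_pos; nra.
  - intro x. pose proof (is_series_scal_R (M D x) _ _ (kcomp_is_series A B HA HB x w)).
    exact H.
  - exact HL.
  - unfold postcomp. change (Series (fun x => M D x * kcomp A B x w)) with (Series (fun x => M D x * kcomp A B x w)).
    rewrite (is_series_unique _ _ HL).
    rewrite <- (is_series_unique _ _ Hc2). apply Series_ext.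
    intro y.
    assert (Hy : ex_series (fun x => M D x * A x y)).
    { apply (ex_series_le_R _ (M D)); [|now exists 1].
      intro x. 
      destruct (kernel_le1 A HA x y). specialize (HMp x). rewrite Rabs_pos_eq by nra. nra. }
    apply Series_correct in Hy.
    pose proof (is_series_scal_r (B y w) _ _ Hy) as Hs.
    rewrite <- (is_series_unique _ _ (Hc1 y)). symmetry. apply is_series_unique.
    eapply is_series_ext; [|exact Hs]. intro x; simpl. lra.
Qed.

Definition kmix (p : R) (A B : nat -> nat -> R) : nat -> nat -> R :=
  fun x w => p * A x w + (1 - p) * B x w.

Lemma kmix_post p A B : 0 <= p <= 1 -> is_postproc A -> is_postproc B -> is_postproc (kmix p A B).
Proof.
  intros Hp HA HB x. split.
  - intro w. unfold kmix. destruct (kernel_le1 A HA x w), (kernel_le1 B HB x w). nra.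
  - replace 1 with (p * 1 + (1 - p) * 1) by lra.
    apply (is_series_plus (fun w => p * A x w) (fun w => (1-p) * B x w)).
    apply (is_series_scal_R p (A x) 1). apply HA.
    apply (is_series_scal_R (1-p) (B x) 1). apply HB.
Qed.

Lemma postcomp_mix {I} (M : algo I) (HM : is_algorithm M) p A B :
  is_postproc A -> is_postproc B ->
  mix p (postcomp A M) (postcomp B M) = postcomp (kmix p A B) M.
Proof.
  intros HA HB.
  apply functional_extensionality; intro D; apply functional_extensionality; intro w.
  destruct (HM D) as [HMp HMs].
  assert (E1 : forall A, is_postproc A -> ex_series (fun x => M D x * A x w)).
  { intros A0 HA0. apply (ex_series_le_R _ (M D)); [|now exists 1].
    intro x. 
    destruct (kernel_le1 A0 HA0 x w). specialize (HMp x). rewrite Rabs_pos_eq by nra. nra. }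
  unfold mix, postcomp, kmix.
  rewrite <- !Series_scal_l. rewrite <- Series_plus.
  - apply Series_ext. intro x. ring.
  - destruct (E1 A HA) as [l Hl]. exists (p * l). apply (is_series_scal_R p _ l Hl).
  - destruct (E1 B HB) as [l Hl]. exists ((1-p) * l). apply (is_series_scal_R (1-p) _ l Hl).
Qed.

Theorem corollary1 (I : Type)
  (HI : exists f : I -> nat, forall a b, f a = f b -> a = b)
  (M : algo I) (HM : is_algorithm M) :
  forall N : algo I,
    CNF (fun X => X = M) N <-> exists A, is_postproc A /\ N = postcomp A M.
Proof.
  intro N. split.
  - intro H. apply H.
    + intros M0 ->. exists delta. split. apply delta_post. symmetry. apply postcomp_delta.
    + intros M0 B [A [HA ->]] HB. exists (kcomp A B). split.
      apply kcomp_post; auto. apply postcomp_comp; auto.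
    + intros M1 M2 p [A [HA ->]] [B [HB ->]] Hp. exists (kmix p A B). split.
      apply kmix_post; auto. apply postcomp_mix; auto.
  - intros [A [HA ->]] S HS Hpp Hcv. apply Hpp; auto.
Qed.
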